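(* Let $n \geq 2$ be an integer and let $$\mathbf{S} = \Big\{(x_1,\ldots,x_n) \in \mathbb{R}^n \;:\; \sum_{i=1}^n x_i = 1,\; x_i \geq 0 \text{ for } i=1,\ldots,n\Big\}.$$ Let $f$ be a real-valued function that is convex and continuous on $\mathbf{S}$ and differentiable on $\mathbf{S}$ (i.e. $f$ is the restriction to $\mathbf{S}$ of a function differentiable on an open neighborhood of $\mathbf{S}$ in $\mathbb{R}^n$). Fix constants $s>0$ and $\rho>1$ and put $\delta_k = s/\rho^k$ for $k \in \mathbb{N}$. Let $\mathbf{u}=(u_1,\ldots,u_n) \in \mathbf{S}$ with $u_j>0$ for all $j$. For $i=1,\ldots,n$ and $k\in\mathbb{N}$ define $\mathbf{u}_k^{(i+)}, \mathbf{u}_k^{(i-)} \in \mathbb{R}^n$ by $$\big(\mathbf{u}_k^{(i+)}\big)_i = u_i + \delta_k,\qquad \big(\mathbf{u}_k^{(i+)}\big)_j = u_j - \frac{\delta_k}{n-1}\ (j\neq i),$$ $$\big(\mathbf{u}_k^{(i-)}\big)_i = u_i - \delta_k,\qquad \big(\mathbf{u}_k^{(i-)}\big)_j = u_j + \frac{\delta_k}{n-1}\ (j\neq i).$$ Suppose that for every $k\in\mathbb{N}$ and every $i\in\{1,\ldots,n\}$ we have $f(\mathbf{u}) \leq f(\mathbf{u}_k^{(i+)})$ whenever $\mathbf{u}_k^{(i+)} \in \mathbf{S}$, and $f(\mathbf{u}) \leq f(\mathbf{u}_k^{(i-)})$ whenever $\mathbf{u}_k^{(i-)} \in \mathbf{S}$.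 Then $\mathbf{u}$ is a global minimizer of $f$ on $\mathbf{S}$, i.e. $f(\mathbf{u}) \leq f(\mathbf{x})$ for all $\mathbf{x}\in\mathbf{S}$.
   Context: $\mathbb{N}$ denotes the positive integers. The points $\mathbf{u}_k^{(i\pm)}$ are obtained from $\mathbf{u}$ by moving the $i$-th coordinate by $\pm\delta_k$ and compensating equally in the other $n-1$ coordinates so that the coordinate sum stays equal to $1$; they lie in $\mathbf{S}$ exactly when all their coordinates are nonnegative. *)

(* Defs.v *)
From mathcomp Require Import ssreflect ssrbool eqtype ssrnat fintype bigop.
From Stdlib Require Import Reals.
Open Scope R_scope.

Definition vec (n : nat) := 'I_n -> R.

Definition vsum {n : nat} (x : vec n) : R := \big[Rplus/0]_(i < n) x i.

Definition vadd {n : nat} (x y : vec n) : vec n := fun i => x i + y i.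
Definition vsub {n : nat} (x y : vec n) : vec n := fun i => x i - y i.
Definition vscale {n : nat} (t : R) (x : vec n) : vec n := fun i => t * x i.

Definition vnorm {n : nat} (x : vec n) : R := sqrt (vsum (fun i => x i * x i)).

Definition in_S {n : nat} (x : vec n) : Prop :=
  vsum x = 1 /\ forall i, 0 <= x i.

Definition convex_on_S {n : nat} (f : vec n -> R) : Prop :=
  forall x y : vec n, in_S x -> in_S y -> forall t : R, 0 <= t <= 1 ->
    f (vadd (vscale t x) (vscale (1 - t) y)) <= t * f x + (1 - t) * f y.

Definition continuous_on_S {n : nat} (f : vec n -> R) : Prop :=
  forall x : vec n, in_S x -> forall eps : R, 0 < eps ->
    exists delta : R, 0 < delta /\
      forall y : vec n, in_S y -> vnorm (vsub y x) < delta ->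
        Rabs (f y - f x) < eps.

Definition open_set {n : nat} (U : vec n -> Prop) : Prop :=
  forall x, U x -> exists r : R, 0 < r /\ forall y, vnorm (vsub y x) < r -> U y.

Definition frechet_diff_at {n : nat} (g : vec n -> R) (x : vec n) : Prop :=
  exists a : vec n, forall eps : R, 0 < eps ->
    exists delta : R, 0 < delta /\
      forall h : vec n, vnorm h < delta ->
        Rabs (g (vadd x h) - g x - vsum (fun i => a i * h i)) <= eps * vnorm h.

Definition differentiable_on_S {n : nat} (f : vec n -> R) : Prop :=
  exists (U : vec n -> Prop) (g : vec n -> R),
    open_set U /\ (forall x, in_S x -> U x) /\
    (forall x, in_S x -> g x = f x) /\
    (forall x, U x -> frechet_diff_at g x).

Definition delta_k (s rho : R) (k : nat) : R := s / rho ^ k.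

Definition shift_pt {n : nat} (u : vec n) (i : 'I_n) (d : R) : vec n :=
  fun j => if j == i then u j + d else u j - d / (INR n - 1).

Definition u_plus {n : nat} (s rho : R) (u : vec n) (k : nat) (i : 'I_n) : vec n :=
  shift_pt u i (delta_k s rho k).
Definition u_minus {n : nat} (s rho : R) (u : vec n) (k : nat) (i : 'I_n) : vec n :=
  shift_pt u i (- delta_k s rho k).

(* Main.v *)
Require Import Defs.
From HB Require Import structures.
From mathcomp Require Import ssreflect ssrfun ssrbool eqtype ssrnat seq fintype bigop.
From Stdlib Require Import Reals Lra Lia FunctionalExtensionality.
Open Scope R_scope.

HB.instance Definition _ := Monoid.isComLaw.Build R 0 Rplus (fun a b c => esym (Rplus_assoc a b c)) Rplus_comm Rplus_0_l.

Section S.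
Variable n : nat.

Lemma vsum_ext (F G : vec n) : (forall j, F j = G j) -> vsum F = vsum G.
Proof. move=> H; rewrite /vsum; apply: eq_bigr => j _; exact: H. Qed.

Lemma vsum_add (F G : vec n) : vsum (fun j => F j + G j) = vsum F + vsum G.
Proof. by rewrite /vsum big_split. Qed.

Lemma vsum_scale c (F : vec n) : vsum (fun j => c * F j) = c * vsum F.
Proof.
rewrite /vsum; elim: (index_enum _) => [|j r IH]; rewrite ?big_nil ?big_cons /=.
  by rewrite Rmult_0_r. by rewrite IH Rmult_plus_distr_l.
Qed.

Definition e (i : 'I_n) : vec n := fun j => if j == i then 1 else 0.

Lemma vsum_e i (F : vec n) : vsum (fun j => F j * e i j) = F i.
Proof.
rewrite /vsum (bigD1 i) //= /e eqxx big1 /=; first ring.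
by move=> j /negbTE ->; ring.
Qed.

Lemma vsum_const c : vsum (fun _ : 'I_n => c) = INR n * c.
Proof.
rewrite /vsum big_const_ord; elim: n => [|k IH]; first by rewrite /= Rmult_0_l.
rewrite S_INR /= IH; ring.
Qed.

Lemma vsum_ge0 (F : vec n) : (forall j, 0 <= F j) -> 0 <= vsum F.
Proof.
move=> H; rewrite /vsum; apply: (big_ind (fun x => 0 <= x)) => //.
  lra. move=> x y; lra.
Qed.

Lemma vnorm_scale t (v : vec n) : vnorm (vscale t v) = Rabs t * vnorm v.
Proof.
rewrite /vnorm /vscale.
rewrite (vsum_ext _ (fun j => (t*t) * (v j * v j))); last by move=> j; ring.
rewrite vsum_scale sqrt_mult_alt; last by nra.
by rewrite -sqrt_Rsqr_abs.
Qed.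

Lemma vnorm_ge0 (v : vec n) : 0 <= vnorm v.
Proof. apply: sqrt_pos. Qed.

End S.
Arguments e {n}.
Arguments vsum_ext {n}. Arguments vsum_add {n}. Arguments vsum_scale {n}. Arguments vsum_e {n}. Arguments vsum_const {n}. Arguments vsum_ge0 {n}. Arguments vnorm_scale {n}. Arguments vnorm_ge0 {n}.

Lemma abs_le x y : Rabs x <= y -> -y <= x <= y.
Proof. unfold Rabs; destruct (Rcase_abs x); lra. Qed.

Lemma le_eps x N : 0 <= N -> (forall eps, 0 < eps -> x <= eps * N) -> x <= 0.
Proof.
move=> hN H; apply: Rnot_lt_le => hx.
set q := x / (2 * (N + 1)).
have hq : 0 < q by rewrite /q; apply: Rdiv_lt_0_compat; lra.
have hqx : x = 2 * (q * N) + 2 * q by rewrite /q; field; lra.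
have := H q hq; have := Rmult_le_pos q N (Rlt_le _ _ hq) hN; lra.
Qed.

Definition vv (n : nat) (i : 'I_n) : vec n :=
  fun j => (INR n / (INR n - 1)) * e i j + (- (1 / (INR n - 1))).
Arguments vv {n}.

Lemma shift_eq n (u : vec n) i d : INR n - 1 <> 0 ->
  shift_pt u i d = vadd u (vscale d (vv i)).
Proof.
move=> h; apply: functional_extensionality => j.
rewrite /shift_pt /vadd /vscale /vv /e; case: (j == i); field; exact h.
Qed.

Lemma dot_v n (a : vec n) (i : 'I_n) : vsum (fun j => a j * vv i j) =
  (INR n / (INR n - 1)) * a i + (- (1 / (INR n - 1))) * vsum a.
Proof.
rewrite (@vsum_ext n _ (fun j => (INR n / (INR n - 1)) * (a j * e i j)
   + (- (1 / (INR n - 1))) * a j)); last by move=> j; rewrite /vv; ring.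
by rewrite vsum_add !vsum_scale vsum_e.
Qed.

Lemma vsum_vv n (i : 'I_n) : INR n - 1 <> 0 -> vsum (vv i) = 0 :> R.
Proof.
move=> h.
rewrite (@vsum_ext n _ (fun j => (fun _ => 1) j * vv i j)); last by move=> j; ring.
rewrite dot_v vsum_const; field; exact h.
Qed.

Lemma dir_zero n (g : vec n -> R) (a u v : vec n)
  (H : forall eps, 0 < eps -> exists d, 0 < d /\ forall h : vec n, vnorm h < d ->
        Rabs (g (vadd u h) - g u - vsum (fun i => a i * h i)) <= eps * vnorm h)
  (Hseq : forall eta, 0 < eta -> exists t, 0 < t < eta /\
        g u <= g (vadd u (vscale t v)) /\ g u <= g (vadd u (vscale (- t) v))) :
  vsum (fun j => a j * v j) = 0.
Proof.
set D := vsum _.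
have hN : 0 <= vnorm v := vnorm_ge0 v.
remember (vnorm v) as N eqn:hNe.
have key : forall eps, 0 < eps -> D <= eps * N /\ - D <= eps * N.
  move=> eps he; have [d [hd Hd]] := H eps he.
  have hpos : 0 < d / (N + 1) by apply: Rdiv_lt_0_compat; lra.
  have [t [[ht0 htd] [h1 h2]]] := Hseq _ hpos.
  have htN : t * (N + 1) < d.
    have := Rmult_lt_compat_r (N + 1) _ _ ltac:(lra) htd.
    have : d / (N + 1) * (N + 1) = d by field; lra.
    lra.
  have n1 : vnorm (vscale t v) = t * N by rewrite vnorm_scale Rabs_right -?hNe; lra.
  have n2 : vnorm (vscale (- t) v) = t * N
    by rewrite vnorm_scale Rabs_Ropp Rabs_right -?hNe; lra.
  have s1 : vsum (fun i => a i * vscale t v i) = t * D.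
    rewrite -vsum_scale; apply: vsum_ext => j; rewrite /vscale; ring.
  have s2 : vsum (fun i => a i * vscale (-t) v i) = - t * D.
    rewrite -vsum_scale; apply: vsum_ext => j; rewrite /vscale; ring.
  have e1 := Hd (vscale t v) ltac:(rewrite n1; nra).
  have e2 := Hd (vscale (-t) v) ltac:(rewrite n2; nra).
  rewrite s1 n1 in e1; rewrite s2 n2 in e2.
  move/abs_le: e1 => e1; move/abs_le: e2 => e2.
  split; nra.
have a1 : D <= 0 by apply: (le_eps _ _ hN) => eps he; case: (key eps he) => ? ?; lra.
have a2 : - D <= 0 by apply: (le_eps _ _ hN) => eps he; case: (key eps he) => ? ?; lra.
lra.
Qed.

Lemma min_pos n (u : vec n) : (forall j, 0 < u j) ->
  exists mu, 0 < mu /\ forall j, mu <= u j.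
Proof.
move=> H; exists (\big[Rmin/1]_(j < n) u j); split.
  apply: (big_ind (fun x => 0 < x)) => //; first lra.
  by move=> x y hx hy; apply: Rmin_glb_lt.
move=> j.
have := mem_index_enum j.
elim: (index_enum _) => [|k r IH] //.
rewrite in_cons big_cons => /orP [/eqP -> | /IH h].
  exact: Rmin_l.
exact: Rle_trans (Rmin_r _ _) h.
Qed.

Lemma in_S_shift n (u : vec n) i d : in_S u -> 2 <= INR n ->
  (forall j, Rabs d <= u j) -> in_S (shift_pt u i d).
Proof.
move=> [hs hp] hn hd.
rewrite shift_eq; last lra.
split.
  by rewrite /vadd /vscale vsum_add vsum_scale vsum_vv ?hs; lra.
move=> j; rewrite -shift_eq; last lra.
rewrite /shift_pt; case: (j == i).
  have := Rle_abs (- d); rewrite Rabs_Ropp; have := hd j; lra.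
have hc : 0 < / (INR n - 1) <= 1.
  split; first (apply: Rinv_0_lt_compat; lra).
  rewrite -Rinv_1; apply: Rinv_le_contravar; lra.
have := hd j; have := Rle_abs d; have := Rle_abs (- d); rewrite Rabs_Ropp.
rewrite /Rdiv; nra.
Qed.

Theorem theorem1 (n : nat) (Hn : (2 <= n)%nat) (f : vec n -> R)
  (Hconv : convex_on_S f) (Hcont : continuous_on_S f)
  (Hdiff : differentiable_on_S f)
  (s rho : R) (Hs : 0 < s) (Hrho : 1 < rho)
  (u : vec n) (Hu : in_S u) (Hupos : forall j, 0 < u j)
  (Hloc : forall (k : nat), (1 <= k)%nat -> forall i : 'I_n,
     (in_S (u_plus s rho u k i) -> f u <= f (u_plus s rho u k i)) /\
     (in_S (u_minus s rho u k i) -> f u <= f (u_minus s rho u k i))) :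
  forall x : vec n, in_S x -> f u <= f x.
Proof.
move=> x Hx.
have [U [g [_ [HUS [Hgf Hgd]]]]] := Hdiff.
have [a Ha] := Hgd u (HUS u Hu).
have hm : 2 <= INR n.
  have : (2 <= n)%coq_nat by apply/leP.
  by move/le_INR.
have [mu [hmu Hmu]] := min_pos _ _ Hupos.
have hfu : f u = g u by rewrite Hgf.
have Hseq : forall i, forall eta, 0 < eta -> exists t, 0 < t < eta /\
        g u <= g (vadd u (vscale t (vv i))) /\ g u <= g (vadd u (vscale (- t) (vv i))).
  move=> i eta he.
  have hr : Rabs (/ rho) < 1.
    rewrite Rabs_right; last (left; apply: Rinv_0_lt_compat; lra).
    rewrite -Rinv_1; apply: Rinv_lt_contravar; lra.
  have hy : 0 < Rmin eta mu / s by apply: Rdiv_lt_0_compat => //; apply: Rmin_glb_lt.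
  have [N HN] := pow_lt_1_zero _ hr _ hy.
  have := HN N.+1 ltac:(lia).
  have hp : 0 < (/ rho) ^ N.+1 by apply: pow_lt; apply: Rinv_0_lt_compat; lra.
  rewrite Rabs_right; last lra.
  move=> hlt.
  have ht : delta_k s rho N.+1 = s * (/ rho) ^ N.+1 by rewrite /delta_k pow_inv.
  have hlt2 : s * (/ rho) ^ N.+1 < Rmin eta mu.
    have := Rmult_lt_compat_l s _ _ Hs hlt.
    have -> : s * (Rmin eta mu / s) = Rmin eta mu by field; lra.
    done.
  have hmin1 := Rmin_l eta mu; have hmin2 := Rmin_r eta mu.
  exists (delta_k s rho N.+1); split.
    rewrite ht; split; [nra | lra].
  have [Hp Hm] := Hloc N.+1 (erefl true) i.
  have hd : forall d, Rabs d = delta_k s rho N.+1 -> forall j, Rabs d <= u j.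
    move=> d -> j; have := Hmu j; rewrite ht; lra.
  have habs : Rabs (delta_k s rho N.+1) = delta_k s rho N.+1
    by rewrite Rabs_right // ht; nra.
  have i1 : in_S (u_plus s rho u N.+1 i) by apply: in_S_shift => //; apply: hd.
  have i2 : in_S (u_minus s rho u N.+1 i).
    by apply: in_S_shift => //; apply: hd; rewrite Rabs_Ropp.
  have := Hp i1; have := Hm i2.
  rewrite /u_plus /u_minus !shift_eq; try lra.
  rewrite -!Hgf -?hfu //; try (rewrite -shift_eq; [|lra]; done).
have HD : forall i, vsum (fun j => a j * vv i j) = 0.
  by move=> i; apply: (dir_zero _ _ _ _ _ Ha (Hseq i)).
have Ha' : forall i, a i = vsum a / INR n.
  move=> i; have := HD i; rewrite dot_v => h.
  have h2 : INR n * a i = vsum a.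
    have -> : INR n * a i = (INR n - 1) * ((INR n / (INR n - 1)) * a i) by field; lra.
    have h' : INR n / (INR n - 1) * a i = 1 / (INR n - 1) * vsum a by lra.
    rewrite h'; field; lra.
  rewrite -h2; field; lra.
have hw : vsum (fun j => a j * vsub x u j) = 0.
  rewrite (@vsum_ext n _ (fun j => (vsum a / INR n) * (x j + (-1) * u j)));
    last by move=> j; rewrite Ha' /vsub; ring.
  rewrite vsum_scale vsum_add vsum_scale; case: Hx => -> _; case: Hu => -> _; ring.
have hNw := vnorm_ge0 (vsub x u).
remember (vnorm (vsub x u)) as Nw eqn:hNe.
suff : f u - f x <= 0 by lra.
apply: (le_eps _ _ hNw) => eps he.
have [d [hd Hd]] := Ha eps he.
set t := Rmin 1 (d / (Nw + 1)) / 2.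
have hq : 0 < d / (Nw + 1) by apply: Rdiv_lt_0_compat; lra.
have hmin1 := Rmin_l 1 (d / (Nw + 1)); have hmin2 := Rmin_r 1 (d / (Nw + 1)).
have hmin3 : 0 < Rmin 1 (d / (Nw + 1)) by apply: Rmin_glb_lt; lra.
have ht0 : 0 < t by rewrite /t; lra.
have ht1 : t <= 1 by rewrite /t; lra.
have htd : t < d / (Nw + 1) by rewrite /t; lra.
have htN : t * (Nw + 1) < d.
  have := Rmult_lt_compat_r (Nw + 1) _ _ ltac:(lra) htd.
  have : d / (Nw + 1) * (Nw + 1) = d by field; lra.
  lra.
have hp : vadd (vscale t x) (vscale (1 - t) u) = vadd u (vscale t (vsub x u)).
  apply: functional_extensionality => j; rewrite /vadd /vscale /vsub; ring.
have hpS : in_S (vadd (vscale t x) (vscale (1 - t) u)).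
  case: Hx => hxs hxp; case: Hu => hus hup; split.
    by rewrite /vadd /vscale vsum_add !vsum_scale hxs hus; ring.
  move=> j; rewrite /vadd /vscale; have := hxp j; have := hup j; nra.
have hc := Hconv x u Hx Hu t ltac:(lra).
rewrite -Hgf // hp in hc.
have n1 : vnorm (vscale t (vsub x u)) = t * Nw
  by rewrite vnorm_scale Rabs_right -?hNe; lra.
have e1 := Hd (vscale t (vsub x u)) ltac:(rewrite n1; nra).
have s1 : vsum (fun i => a i * vscale t (vsub x u) i) = t * 0.
  rewrite -hw -vsum_scale; apply: vsum_ext => j; rewrite /vscale; ring.
rewrite s1 n1 -hfu in e1; move/abs_le: e1 => e1.
nra.
Qed.
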